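(* Fix integers $\ell < \mu < u$ and let $\mu' = \mu + 1$. Let $p \in (0,1)$ be any dyadic rational. Let $Z \sim \operatorname{DSG}_{\mu,p}$ and $Z' \sim \operatorname{DSG}_{\mu',p}$ be samples from the (unclamped) Dyadic Symmetric Geometric distribution centered at $\mu$ and $\mu'$, respectively. Let $Y = \max\{\ell, \min\{Z, u\}\}$ and $Y' = \max\{\ell, \min\{Z', u\}\}$. Then for every $y \in \mathbb{Z} \cap [\ell,u]$, \[ \frac{\Pr[Y = y]}{\Pr[Y' = y]} \le \frac{1}{1 - p} \quad\text{and}\quad \frac{\Pr[Y' = y]}{\Pr[Y = y]} \le \frac{1}{1 - p}, \] so the mechanism (outputting $Y$ when the center is $\mu$) is $\varepsilon$-differentially private with $\varepsilon = \ln\!\left(\tfrac{1}{1-p}\right)$.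
   Context: The Dyadic Symmetric Geometric distribution $\operatorname{DSG}_{c,p}$ with center $c\in\mathbb{Z}$ and dyadic parameter $p\in(0,1)$ is defined as follows: flip one unbiased coin to obtain a sign $S\in\{-1,+1\}$ and draw $G$ from a geometric distribution with parameter $p$ taking values in $\{0,1,2,\dots\}$; set $Z = c - G$ if $S=-1$ and $Z = c + 1 + G$ if $S=+1$. The censored version clamps $Z$ to $[\ell,u]$ via $\max\{\ell,\min\{Z,u\}\}$. Adjacent inputs are modeled by centers differing by one ($\mu$ vs. $\mu+1$). *)

(* Defs.v *)
From Stdlib Require Import Reals ZArith Lra.
From Coquelicot Require Import Coquelicot.
Open Scope R_scope.

Definition dyadic (p : R) : Prop :=
  exists (a k : nat), p = INR a / 2 ^ k.

Definition geom_pmf (p : R) (k : nat) : R := p * (1 - p) ^ k.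

Definition clamp (l u z : Z) : Z := Z.max l (Z.min z u).

Definition ind (b : bool) : R := if b then 1 else 0.

(* Pr[Y = y] where Y = clamp l u Z, Z ~ DSG_{c,p} generated by a fair sign S
   and G ~ Geom(p):  Z = c - G if S = -1,  Z = c + 1 + G if S = +1.
   The probability is computed over the joint law of (S, G). *)
Definition cdsg_prob (l u c : Z) (p : R) (y : Z) : R :=
  / 2 * Series (fun k => geom_pmf p k * ind (Z.eqb (clamp l u (c - Z.of_nat k)) y))
  + / 2 * Series (fun k => geom_pmf p k * ind (Z.eqb (clamp l u (c + 1 + Z.of_nat k)) y)).

(* Main.v *)
Require Import Defs.
From Stdlib Require Import Reals ZArith Lia Lra.
From Coquelicot Require Import Coquelicot.
Open Scope R_scope.

Lemma is_series_eq (a b : nat -> R) (l l' : R) :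
  is_series a l -> l = l' -> (forall n, a n = b n) -> is_series b l'.
Proof. intros H <- E. exact (is_series_ext a b l E H). Qed.

Lemma L2 (p : R) (n : nat) : 0 < p < 1 ->
  is_series (fun k => geom_pmf p k * Defs.ind (Nat.leb n k)) ((1-p)^n).
Proof.
  intros Hp. unfold geom_pmf. induction n.
  - assert (H := is_series_geom (1-p)).
    assert (Ha : Rabs (1-p) < 1) by (rewrite Rabs_right; lra).
    specialize (H Ha). apply (is_series_scal p) in H.
    eapply (is_series_eq _ _ _ _ H).
    { unfold scal; simpl; unfold mult; simpl. field. lra. }
    intro k. simpl. unfold scal; simpl; unfold mult; simpl. ring.
  - apply is_series_decr_1.
    apply (is_series_scal (1-p)) in IHn.
    eapply (is_series_eq _ _ _ _ IHn).
    { unfold scal, plus, opp; simpl; unfold mult, plus, opp; simpl. unfold Defs.ind. ring. }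
    intro k. unfold scal; simpl; unfold mult; simpl. ring.
Qed.

Lemma L1 (p : R) (n : nat) : 0 < p < 1 ->
  is_series (fun k => geom_pmf p k * Defs.ind (Nat.eqb k n)) (p * (1-p)^n).
Proof.
  intros Hp.
  assert (H := is_series_minus _ _ _ _ (L2 p n Hp) (L2 p (S n) Hp)).
  eapply (is_series_eq _ _ _ _ H).
  { unfold plus, opp; simpl; unfold plus, opp; simpl. unfold geom_pmf. ring. }
  intro k. cbv beta.
  destruct (Nat.eqb_spec k n); destruct (Nat.leb_spec n k); destruct (Nat.leb_spec (S n) k);
    unfold Defs.ind; try lia; unfold plus, opp; simpl; unfold plus, opp; simpl; ring.
Qed.

Lemma L3 (p : R) : 0 < p < 1 -> is_series (fun k => geom_pmf p k * Defs.ind false) 0.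
Proof.
  intros Hp. assert (H := is_series_scal 0 _ _ (L2 p 0 Hp)).
  eapply (is_series_eq _ _ _ _ H).
  { unfold scal; simpl; unfold mult; simpl. ring. }
  intro k. unfold scal; simpl; unfold mult; simpl. unfold Defs.ind. ring.
Qed.

Lemma S1 p (b : nat -> bool) n : 0 < p < 1 -> (forall k, b k = Nat.eqb k n) ->
  Series (fun k => geom_pmf p k * Defs.ind (b k)) = p * (1-p)^n.
Proof. intros Hp E. apply is_series_unique. eapply is_series_ext; [|apply (L1 p n Hp)].
  intro k; simpl; rewrite E; reflexivity. Qed.
Lemma S2 p (b : nat -> bool) n : 0 < p < 1 -> (forall k, b k = Nat.leb n k) ->
  Series (fun k => geom_pmf p k * Defs.ind (b k)) = (1-p)^n.
Proof. intros Hp E. apply is_series_unique. eapply is_series_ext; [|apply (L2 p n Hp)].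
  intro k; simpl; rewrite E; reflexivity. Qed.
Lemma S3 p (b : nat -> bool) : 0 < p < 1 -> (forall k, b k = false) ->
  Series (fun k => geom_pmf p k * Defs.ind (b k)) = 0.
Proof. intros Hp E. apply is_series_unique. eapply is_series_ext; [|apply (L3 p Hp)].
  intro k; simpl; rewrite E; reflexivity. Qed.

Lemma div_le X Y q : 0 < Y -> 0 < q -> X * q <= Y -> X / Y <= / q.
Proof.
  intros HY Hq H. unfold Rdiv.
  assert (0 < /Y) by (apply Rinv_0_lt_compat; lra).
  assert (0 < /q) by (apply Rinv_0_lt_compat; lra).
  assert (Y * /Y = 1) by (field; lra).
  assert (q * /q = 1) by (field; lra).
  assert (X * q * (/Y * /q) <= Y * (/Y * /q)) by (apply Rmult_le_compat_r; nra).
  nra.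
Qed.

Ltac zb := intro k; unfold clamp;
  repeat match goal with
  | |- context [Z.eqb ?a ?b] => destruct (Z.eqb_spec a b)
  | |- context [Nat.eqb ?a ?b] => destruct (Nat.eqb_spec a b)
  | |- context [Nat.leb ?a ?b] => destruct (Nat.leb_spec a b)
  end; try reflexivity; lia.

Ltac fin := match goal with
  | H : 0 < (1 - ?p) ^ ?a |- _ =>
     let X := fresh "X" in set (X := (1-p)^a) in *;
     assert (0 < p * X) by (apply Rmult_lt_0_compat; lra);
     assert (0 < p * X * (1-p)) by (apply Rmult_lt_0_compat; lra);
     assert (0 < p * X * p) by (apply Rmult_lt_0_compat; lra);
     nra
  | H : 0 < ?p < 1 |- _ => assert (0 < p * p) by nra; assert (0 < p * (1-p)) by nra; nra
  end.

Theorem mainTheorem14 (l mu u : Z) (p : R) :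
  (l < mu)%Z -> (mu < u)%Z ->
  0 < p < 1 -> dyadic p ->
  forall y : Z, (l <= y <= u)%Z ->
    cdsg_prob l u mu p y / cdsg_prob l u (mu + 1) p y <= / (1 - p) /\
    cdsg_prob l u (mu + 1) p y / cdsg_prob l u mu p y <= / (1 - p).
Proof.
  intros Hl Hu Hp _ y Hy.
  assert (Hq : 0 < 1 - p) by lra.
  assert (Hpow : forall n, 0 < (1-p)^n) by (intro; apply pow_lt; lra).
  unfold cdsg_prob.
  destruct (Z.eq_dec y l) as [->|Hyl].
  { set (a := Z.to_nat (mu - l)).
    rewrite (S2 p (fun k => Z.eqb (clamp l u (mu - Z.of_nat k)) l) a Hp) by zb.
    rewrite (S3 p (fun k => Z.eqb (clamp l u (mu + 1 + Z.of_nat k)) l) Hp) by zb.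
    rewrite (S2 p (fun k => Z.eqb (clamp l u (mu + 1 - Z.of_nat k)) l) (S a) Hp) by zb.
    rewrite (S3 p (fun k => Z.eqb (clamp l u (mu + 1 + 1 + Z.of_nat k)) l) Hp) by zb.
    specialize (Hpow a). simpl.
    split; apply div_le; fin. }
  destruct (Z_le_gt_dec y mu) as [Hym|Hym].
  { set (a := Z.to_nat (mu - y)).
    rewrite (S1 p (fun k => Z.eqb (clamp l u (mu - Z.of_nat k)) y) a Hp) by zb.
    rewrite (S3 p (fun k => Z.eqb (clamp l u (mu + 1 + Z.of_nat k)) y) Hp) by zb.
    rewrite (S1 p (fun k => Z.eqb (clamp l u (mu + 1 - Z.of_nat k)) y) (S a) Hp) by zb.
    rewrite (S3 p (fun k => Z.eqb (clamp l u (mu + 1 + 1 + Z.of_nat k)) y) Hp) by zb.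
    specialize (Hpow a). simpl.
    split; apply div_le; fin. }
  destruct (Z.eq_dec y (mu + 1)) as [->|Hy1].
  { destruct (Z.eq_dec (mu + 1) u) as [Eu|Eu].
    - rewrite (S3 p (fun k => Z.eqb (clamp l u (mu - Z.of_nat k)) (mu + 1)) Hp) by zb.
      rewrite (S2 p (fun k => Z.eqb (clamp l u (mu + 1 + Z.of_nat k)) (mu + 1)) 0 Hp) by zb.
      rewrite (S1 p (fun k => Z.eqb (clamp l u (mu + 1 - Z.of_nat k)) (mu + 1)) 0 Hp) by zb.
      rewrite (S2 p (fun k => Z.eqb (clamp l u (mu + 1 + 1 + Z.of_nat k)) (mu + 1)) 0 Hp) by zb.
      simpl. split; apply div_le; fin.
    - rewrite (S3 p (fun k => Z.eqb (clamp l u (mu - Z.of_nat k)) (mu + 1)) Hp) by zb.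
      rewrite (S1 p (fun k => Z.eqb (clamp l u (mu + 1 + Z.of_nat k)) (mu + 1)) 0 Hp) by zb.
      rewrite (S1 p (fun k => Z.eqb (clamp l u (mu + 1 - Z.of_nat k)) (mu + 1)) 0 Hp) by zb.
      rewrite (S3 p (fun k => Z.eqb (clamp l u (mu + 1 + 1 + Z.of_nat k)) (mu + 1)) Hp) by zb.
      simpl. split; apply div_le; fin. }
  destruct (Z.eq_dec y u) as [->|Hyu].
  { set (a := Z.to_nat (u - mu - 2)).
    rewrite (S3 p (fun k => Z.eqb (clamp l u (mu - Z.of_nat k)) u) Hp) by zb.
    rewrite (S2 p (fun k => Z.eqb (clamp l u (mu + 1 + Z.of_nat k)) u) (S a) Hp) by zb.
    rewrite (S3 p (fun k => Z.eqb (clamp l u (mu + 1 - Z.of_nat k)) u) Hp) by zb.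
    rewrite (S2 p (fun k => Z.eqb (clamp l u (mu + 1 + 1 + Z.of_nat k)) u) a Hp) by zb.
    specialize (Hpow a). simpl.
    split; apply div_le; fin. }
  { set (a := Z.to_nat (y - mu - 2)).
    rewrite (S3 p (fun k => Z.eqb (clamp l u (mu - Z.of_nat k)) y) Hp) by zb.
    rewrite (S1 p (fun k => Z.eqb (clamp l u (mu + 1 + Z.of_nat k)) y) (S a) Hp) by zb.
    rewrite (S3 p (fun k => Z.eqb (clamp l u (mu + 1 - Z.of_nat k)) y) Hp) by zb.
    rewrite (S1 p (fun k => Z.eqb (clamp l u (mu + 1 + 1 + Z.of_nat k)) y) a Hp) by zb.
    specialize (Hpow a). simpl.
    split; apply div_le; fin. }
Qed.
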